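(* Let $n\ge2$ and let $Q_0\subset\mathbb{R}^n$ be a cube. For $N$ sufficiently large, $$s_N(R_{p,2}\log^\alpha)\lesssim\begin{cases}2^{-Nn(\frac{n+2}{2n}-\frac1p)}N^{-\alpha},& p>\frac{2n}{n+2},\ \alpha\in\mathbb{R},\\ N^{\frac12-\alpha},& p=\frac{2n}{n+2},\ \alpha>\frac12,\end{cases}$$ with implicit constants independent of $N$.
   Context: Cubes have sides parallel to axes; $\mathcal{D}(Q_0)$ is the family of dyadic subcubes of $Q_0$. A countable $\mathcal{Q}=(Q_i)\subset\mathcal{D}(Q_0)$ is sparse if there exist pairwise disjoint measurable $E_{Q_i}\subseteq Q_i$ with $|E_{Q_i}|\ge\frac12|Q_i|$; $S(Q_0)$ is the set of sparse families. For $f\in L^1(Q_0)$, $s_N(f)=\sup_{\mathcal{Q}\in S(Q_0)}\big[\sum_{Q\in\mathcal{Q},\,\ell(Q)\le2^{-(N-1)}\ell(Q_0)}\big(|Q|^{\frac1n-\frac12}\int_Q|f|\big)^2\big]^{1/2}$. The Riesz–Morrey–Tadmor space $R_{p,2}\log^\alpha(Q_0)$ is normed by $\|f\|=\sup\big\{\sum_i\big[(1-(\log|Q_i|)_-)^\alpha|Q_i|^{-1/p'}\int_{Q_i}|f|\big]^2\big\}^{1/2}$, the supremum over all families $(Q_i)$ of pairwise disjoint cubes in $\mathcal{D}(Q_0)$, where $(a)_-=\min\{a,0\}$ and $p'$ is the dual exponent; $s_N(R_{p,2}\log^\alpha)=\sup\{s_N(f):\|f\|_{R_{p,2}\log^\alpha(Q_0)}\le1\}$.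 *)

(* Defs.v *)
From HB Require Import structures.
From mathcomp Require Import all_boot all_order all_algebra.
From mathcomp Require Import all_classical all_reals all_analysis.
Set Implicit Arguments. Unset Strict Implicit. Unset Printing Implicit Defensive.
Import Order.TTheory GRing.Theory Num.Theory.
Import numFieldNormedType.Exports.
Local Open Scope classical_set_scope.
Local Open Scope ring_scope.

(* n-dimensional Lebesgue measure on R^n = n.-tuple R (with the library's
   product sigma-algebra of Borel sets), defined as the iterated integral of
   one-dimensional Lebesgue measure (Tonelli / product-measure construction):
   lebn 0 = Dirac mass at the empty tuple,
   lebn (m+1) A = int_R lebn m {t | (x :: t) in A} dx. *)
Fixpoint lebn (R : realType) (n : nat) : set (n.-tuple R) -> \bar R :=
  match n return set (n.-tuple R) -> \bar R with
  | 0 => fun A => (\1_A [tuple] : R)%:E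
  | m.+1 => fun A =>
      (\int[@lebesgue_measure R]_x @lebn R m [set t | A (@cons_tuple m R x t)])%E
  end.
Arguments lebn {R} n.

Section Cubes.
Variables (R : realType) (n : nat).
Implicit Types (a : n.-tuple R) (L : R).

Definition cube a L : set (n.-tuple R) :=
  [set x | forall i : 'I_n, tnth a i <= tnth x i < tnth a i + L].

(* Dyadic subcubes of Q0 are indexed by (k, j), k the generation, and
   j : n.-tuple nat with every j_i < 2^k. *)
Definition dyadic_index (q : nat * n.-tuple nat) : Prop :=
  forall i : 'I_n, (tnth q.2 i < 2 ^ q.1)%N.

Definition dside L (k : nat) : R := L / 2 ^+ k.

Definition dvol L (k : nat) : R := (dside L k) ^+ n.

Definition dcube a L (q : nat * n.-tuple nat) : set (n.-tuple R) :=
  [set x | forall i : 'I_n,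
     tnth a i + dside L q.1 * (tnth q.2 i)%:R <= tnth x i
     < tnth a i + dside L q.1 * (tnth q.2 i).+1%:R].

Definition dyadic_family (F : set (nat * n.-tuple nat)) : Prop :=
  forall q, F q -> dyadic_index q.

Definition disjoint_family a L (F : set (nat * n.-tuple nat)) : Prop :=
  dyadic_family F /\
  forall q q', F q -> F q' -> q <> q' -> dcube a L q `&` dcube a L q' = set0.

Definition sparse_family a L (F : set (nat * n.-tuple nat)) : Prop :=
  dyadic_family F /\
  exists E : nat * n.-tuple nat -> set (n.-tuple R),
    (forall q, F q ->
       [/\ measurable (E q), E q `<=` dcube a L q &
           ((dvol L q.1) / 2)%:E <= lebn n (E q)]%E) /\
    (forall q q', F q -> F q' -> q <> q' -> E q `&` E q' = set0).

Local Open Scope ereal_scope.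

Definition sN a L (N : nat) (f : n.-tuple R -> R) : \bar R :=
  ereal_sup [set poweR
     (\esum_(q in [set q | F q /\
                  (dside L q.1 <= 2 `^ (- (N%:R - 1)) * L)%R])
        (let t := ((dvol L q.1) `^ (n%:R^-1 - 2^-1))%:E *
                  \int[lebn n]_(x in dcube a L q) (`|f x|)%:E in t * t))
     2^-1 | F in sparse_family a L].

(* the norm of the Riesz-Morrey-Tadmor space R_{p,2} log^alpha (Q0);
   |Q|^{-1/p'} = |Q|^{-(1 - 1/p)} *)
Definition rmt_norm a L (p alpha : R) (f : n.-tuple R -> R) : \bar R :=
  ereal_sup [set poweR
     (\esum_(q in F)
        (let t := (((1 - Num.min (ln (dvol L q.1)) 0) `^ alpha) *
                   (dvol L q.1) `^ (- (1 - p^-1)))%:E *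
                  \int[lebn n]_(x in dcube a L q) (`|f x|)%:E in t * t))
     2^-1 | F in disjoint_family a L].

Definition sN_space a L (p alpha : R) (N : nat) : \bar R :=
  ereal_sup [set sN a L N f | f in
    [set f : n.-tuple R -> R | (lebn n).-integrable (cube a L) (EFin \o f)
                              /\ rmt_norm a L p alpha f <= 1]].

End Cubes.

(* Main.v *)
Require Import Defs.
From HB Require Import structures.
From mathcomp Require Import all_boot all_order all_algebra.
From mathcomp Require Import all_classical all_reals all_analysis.
From mathcomp Require Import ring lra.
Import Order.TTheory GRing.Theory Num.Theory.
Import numFieldNormedType.Exports.
Local Open Scope classical_set_scope.
Local Open Scope ring_scope.

Set Implicit Arguments. Unset Strict Implicit. Unset Printing Implicit Defensive.

Lemma powRE' (R : realType) (a x : R) : 0 < a -> a `^ x = expR (x * ln a).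
Proof. by move=> a0; rewrite /powR gt_eqF. Qed.

Lemma ln_le_sub1 (R : realType) (y : R) : 0 < y -> ln y <= y - 1.
Proof.
move=> y0; have := @le_ln1Dx R (y - 1); have -> : 1 + (y - 1) = y by ring.
by apply; lra.
Qed.

Lemma ln_diff_le (R : realType) (x y : R) : 0 < x -> 0 < y -> ln y - ln x <= (y - x) / x.
Proof.
move=> x0 y0; rewrite -ln_div ?posrE//; apply: le_trans (ln_le_sub1 _) _.
  exact: divr_gt0.
by rewrite mulrBl divff ?gt_eqF.
Qed.

Lemma ln_diff_ge (R : realType) (x y : R) : 0 < x -> 0 < y -> (y - x) / y <= ln y - ln x.
Proof.
move=> x0 y0; have := ln_diff_le y0 x0.
have e : (y - x) / y = - ((x - y) / y) by rewrite -mulNr opprB.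
rewrite e; lra.
Qed.

Lemma conv_ineq (R : realType) (v v' g : R) : 0 < v -> v < v' -> 0 < g ->
  g * (v' - v) * expR (- ((g + 1) * ln v')) <= expR (- (g * ln v)) - expR (- (g * ln v')).
Proof.
move=> v0 vv g0; have v'0 : 0 < v' by apply: lt_trans vv.
have Ee0 : 0 < expR (- (g * ln v')) := expR_gt0 _.
have e1 : expR (- (g * ln v)) = expR (- (g * ln v')) * expR (g * (ln v' - ln v)).
  by rewrite -expRD; congr expR; ring.
have e2 : expR (- ((g + 1) * ln v')) = expR (- (g * ln v')) / v'.
  rewrite -[X in _ / X](lnK v'0) -expRB; congr expR; ring.
have hD := ln_diff_ge v0 v'0.
have h1 := expR_ge1Dx (g * (ln v' - ln v)).
have h2 : g * ((v' - v) / v') <= g * (ln v' - ln v) by apply: ler_wpM2l => //; exact: ltW.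
have h3 : expR (- (g * ln v')) * (1 + g * ((v' - v) / v')) <=
          expR (- (g * ln v')) * expR (g * (ln v' - ln v)).
  apply: ler_wpM2l; first exact: ltW.
  lra.
rewrite e1 e2.
have e3 : g * (v' - v) * (expR (- (g * ln v')) / v') =
   expR (- (g * ln v')) * (1 + g * ((v' - v) / v')) - expR (- (g * ln v')) by ring.
rewrite e3; lra.
Qed.

Section RealPart.
Variables (R : realType) (n : nat) (L p alpha : R).
Hypotheses (n1 : (1 <= n)%N) (L0 : 0 < L).

Definition cc : R := n%:R * ln 2.
Definition a0 : R := n%:R * ln L.
Definition uu (k : nat) : R := k%:R * cc - a0.
Definition theta : R := (n%:R + 2) / (2 * n%:R) - p^-1.
Definition ww (k : nat) : R := (1 - Num.min (ln (dvol n L k)) 0) `^ alpha.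
Definition AA (k : nat) : R := dvol n L k `^ theta / ww k.

Lemma cc_gt0 : 0 < cc.
Proof. by rewrite /cc mulr_gt0 ?ltr0n// ln_gt0// ltr1n. Qed.

Lemma vol_gt0 k : 0 < dvol n L k.
Proof. by rewrite /dvol /dside exprn_gt0// divr_gt0// exprn_gt0. Qed.

Lemma lnvol k : ln (dvol n L k) = a0 - k%:R * cc.
Proof.
rewrite /dvol /dside lnXn ?divr_gt0 ?exprn_gt0// ln_div ?posrE ?exprn_gt0//.
rewrite lnXn// /a0 /cc; ring.
Qed.

Lemma AAexp k : 0 <= uu k ->
  AA k = expR (- (theta * uu k) - alpha * ln (1 + uu k)).
Proof.
move=> u0; rewrite /AA /ww lnvol.
have -> : Num.min (a0 - k%:R * cc) 0 = a0 - k%:R * cc.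
  by apply/min_idPl; move: u0; rewrite /uu; lra.
rewrite (powRE' _ (vol_gt0 k)) lnvol.
have -> : 1 - (a0 - k%:R * cc) = 1 + uu k by rewrite /uu; ring.
rewrite powRE'; last by lra.
rewrite -expRB; congr expR; rewrite /uu; ring.
Qed.

Lemma AA_gt0 k : 0 < AA k.
Proof.
apply: divr_gt0; first exact: powR_gt0 (vol_gt0 k).
apply: powR_gt0.
have : Num.min (ln (dvol n L k)) 0 <= 0 by rewrite ge_min lexx orbT.
lra.
Qed.


Definition gg (N k : nat) : R := if (N.-1 <= k)%N then AA k ^+ 2 else 0.

Lemma telesc (g P : nat -> R) : (forall k, g k <= P k - P k.+1) ->
  (forall k, 0 <= P k) -> forall m, \sum_(0 <= k < m) g k <= P 0%N.
Proof.
move=> hg hP m; suff: \sum_(0 <= k < m) g k <= P 0%N - P m.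
  by have := hP m; lra.
elim: m => [|m IH]; first by rewrite big_geq// subrr.
rewrite big_nat_recr//=; have := hg m; lra.
Qed.

Lemma uuS k : uu k.+1 = uu k + cc.
Proof. by rewrite /uu -natr1; ring. Qed.

Lemma uu_le k l : (k <= l)%N -> uu k <= uu l.
Proof.
move=> kl; rewrite /uu lerD2r ler_wpM2r ?ler_nat//; exact: ltW cc_gt0.
Qed.

Lemma N0_prop (X : R) : exists N0 : nat, (1 <= N0)%N /\
  forall N, (N0 <= N)%N -> X < N%:R * cc.
Proof.
exists (Num.truncn (X / cc)).+1; split=> // N hN.
have h1 := truncnS_gt (X / cc).
have h2 : X / cc < N%:R by apply: lt_le_trans h1 _; rewrite ler_nat.
by rewrite -ltr_pdivrMr// cc_gt0.
Qed.

Lemma vM_bounds (N : nat) : (1 <= N)%N ->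
  2 * `|1 - cc - a0| <= N%:R * cc ->
  N%:R * cc / 2 <= 1 + uu N.-1 <= 2 * (N%:R * cc).
Proof.
move=> N1 hX; have e : N.-1%:R = N%:R - 1 :> R.
  by case: (N) N1 => // N' _; rewrite /= -natr1 addrK.
have := ler_norm (1 - cc - a0); have := ler_norm (- (1 - cc - a0)).
rewrite normrN /uu e => h1 h2.
have c0 := cc_gt0.
apply/andP; split; lra.
Qed.


Lemma AA_ratio k (th0 : 0 < theta) : 0 <= uu k -> 2 * `|alpha| / theta <= 1 + uu k ->
  AA k.+1 <= expR (- (theta * cc / 2)) * AA k.
Proof.
move=> u0 hE; have c0 := cc_gt0.
rewrite (AAexp (k := k.+1)); last first.
  by rewrite uuS; lra.
rewrite AAexp// -expRD ler_expR uuS.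
move: (uu k) u0 hE => u u0 hE.
have v0 : 0 < 1 + u by lra.
have v1 : 0 < 1 + (u + cc) by lra.
have hD1 := ln_diff_le v0 v1.
have hD0 := ln_diff_ge v0 v1.
have e1 : (1 + (u + cc) - (1 + u)) = cc by ring.
rewrite e1 in hD1 hD0.
have hD0' : 0 <= ln (1 + (u + cc)) - ln (1 + u).
  apply: le_trans hD0; exact/ltW/divr_gt0.
have eD : alpha * (ln (1 + (u + cc)) - ln (1 + u)) = alpha * ln (1 + (u + cc)) - alpha * ln (1 + u) by ring.
move: (ln (1 + (u + cc)) - ln (1 + u)) hD1 hD0 hD0' eD => D hD1 hD0 hD0' eD.
have h1 : - alpha * D <= `|alpha| * D.
  apply: ler_wpM2r => //; rewrite -normrN; exact: ler_norm.
have h2 : `|alpha| * D <= `|alpha| * (cc / (1 + u)) by apply: ler_wpM2l.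
have h3 : `|alpha| / (1 + u) <= theta / 2.
  by rewrite ler_pdivrMr //; move: hE; rewrite ler_pdivrMr //; nra.
have h4 : `|alpha| * (cc / (1 + u)) <= theta / 2 * cc.
  rewrite mulrA mulrAC; apply: ler_wpM2r => //; exact: ltW.
have e2 : - alpha * D = - (alpha * D) by ring.
rewrite e2 eD in h1.
have e3 : theta / 2 * cc = theta * cc / 2 by ring.
rewrite e3 in h4.
have e4 : theta * (u + cc) = theta * u + theta * cc by ring.
rewrite e4; lra.
Qed.


Lemma case1 : 0 < theta -> exists C : R, 0 < C /\ exists N0 : nat, forall N : nat, (N0 <= N)%N ->
  forall m, \sum_(0 <= k < m) gg N k <=
     (C * 2 `^ (- (N%:R * n%:R * theta)) * N%:R `^ (- alpha)) ^+ 2.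
Proof.
move=> th0; have c0 := cc_gt0.
set q := expR (- (theta * cc / 2)).
have q0 : 0 < q by exact: expR_gt0.
have q1 : q < 1 by rewrite /q expR_lt1 oppr_lt0 divr_gt0 // mulr_gt0.
have q21 : 0 < 1 - q ^+ 2 by rewrite expr2; nra.
set E := 2 * `|alpha| / theta.
have [N0 [N01 HN0]] := N0_prop (2 * `|1 - cc - a0| + 2 * cc + 2 * `|a0| + E + 2).
set C1 := expR (theta * (cc + a0) + `|alpha| * (`|ln cc| + ln 2)).
set K := (1 - q ^+ 2)^-1.
have K0 : 0 < K by rewrite /K invr_gt0.
exists (Num.sqrt K * C1); split.
  by rewrite mulr_gt0 ?expR_gt0 // sqrtr_gt0.
exists N0 => N hN m.
have hX := HN0 N hN.
have N1 : (1 <= N)%N by apply: leq_trans hN.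
have E0 : 0 <= E by rewrite /E divr_ge0 // ?mulr_ge0 // ltW.
have a1 := ler_norm a0; have a2 := ler_norm (- a0); rewrite normrN in a2.
have b1 := ler_norm (1 - cc - a0).
have b2 := normr_ge0 (1 - cc - a0).
have hvM := vM_bounds N1 (ltac:(lra)).
have eM : N.-1%:R = N%:R - 1 :> R by case: (N) N1 => // N' _; rewrite /= -natr1 addrK.
have uM : uu N.-1 = N%:R * cc - cc - a0 by rewrite /uu eM; ring.
have uM0 : 0 <= uu N.-1 by rewrite uM; lra.
have uME : E <= 1 + uu N.-1 by rewrite uM; lra.
pose P k := AA (maxn k N.-1) ^+ 2 / (1 - q ^+ 2).
have Pge0 k : 0 <= P k by rewrite /P divr_ge0 // ?sqr_ge0 // ltW.
have hg k : gg N k <= P k - P k.+1.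
  rewrite /gg /P /=; case: leqP => hk.
    rewrite ?(maxn_idPl hk) (maxn_idPl (leq_trans hk (leqnSn k))).
    have uk0 : 0 <= uu k by apply: le_trans uM0 (uu_le hk).
    have ukE : E <= 1 + uu k by have := uu_le hk; lra.
    have hr := AA_ratio th0 uk0 ukE.
    have A0 := AA_gt0 k; have A1 := AA_gt0 k.+1.
    have hr2 : AA k.+1 ^+ 2 <= q ^+ 2 * AA k ^+ 2.
      by rewrite -exprMn expr2 [X in _ <= X]expr2 ler_pM // ltW.
    rewrite -mulrBl ler_pdivlMr //.
    have -> : AA k ^+ 2 * (1 - q ^+ 2) = AA k ^+ 2 - q ^+ 2 * AA k ^+ 2 by ring.
    lra.
  rewrite ?(maxn_idPr (ltnW hk)) ?(maxn_idPr hk) subrr //.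
apply: le_trans (telesc hg Pge0 m) _.
rewrite /P max0n.
have hA : AA N.-1 <= C1 * 2 `^ (- (N%:R * n%:R * theta)) * N%:R `^ (- alpha).
  have Npos : 0 < N%:R :> R by rewrite ltr0n.
  rewrite AAexp // (powRE' _ (ltr0Sn _ 1)) (powRE' _ Npos) /C1 -!expRD ler_expR.
  have v0 : 0 < 1 + uu N.-1 by lra.
  have p2c : 0 < 2 * cc by rewrite mulr_gt0.
  have p2cN : 0 < 2 * cc * N%:R by rewrite mulr_gt0.
  have pcN : 0 < cc * N%:R by rewrite mulr_gt0.
  have pcN2 : 0 < cc * N%:R / 2 by rewrite divr_gt0.
  have hl1 : ln (1 + uu N.-1) <= ln 2 + ln cc + ln N%:R.
    rewrite -lnM ?posrE // -lnM ?posrE //.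
    rewrite ler_ln ?posrE //.
    have -> : 2 * cc * N%:R = 2 * (N%:R * cc) by ring.
    by move: hvM => /andP[_].

  have hl2 : ln cc + ln N%:R - ln 2 <= ln (1 + uu N.-1).
    rewrite -lnM ?posrE // -ln_div ?posrE //.
    rewrite ler_ln ?posrE //.
    have -> : cc * N%:R / 2 = N%:R * cc / 2 by ring.
    by move: hvM => /andP[+ _].
  have l2 : 0 <= ln (2 : R) by rewrite ln_ge0 // ler1n.
  have lc1 := ler_norm (ln cc); have lc2 := ler_norm (- ln cc); rewrite normrN in lc2.
  have hy : `|ln (1 + uu N.-1) - ln N%:R| <= `|ln cc| + ln 2.
    by rewrite ler_norml; apply/andP; split; lra.
  have hay : - alpha * (ln (1 + uu N.-1) - ln N%:R) <= `|alpha| * (`|ln cc| + ln 2).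
    apply: le_trans (ler_norm _) _; rewrite normrM normrN.
    by apply: ler_wpM2l => //.
  rewrite uM in hay *; rewrite /cc in hay *.
  have e9 : - alpha * (ln (1 + (N%:R * (n%:R * ln 2) - n%:R * ln 2 - a0)) - ln N%:R)
     = - (alpha * ln (1 + (N%:R * (n%:R * ln 2) - n%:R * ln 2 - a0))) + alpha * ln N%:R by ring.
  rewrite e9 in hay.
  have e5 : theta * (N%:R * (n%:R * ln 2) - n%:R * ln 2 - a0) =
     theta * N%:R * n%:R * ln 2 - theta * n%:R * ln 2 - theta * a0 by ring.
  rewrite e5.
  have e6 : theta * (n%:R * ln 2 + a0) = theta * n%:R * ln 2 + theta * a0 by ring.
  have e7 : - (N%:R * n%:R * theta) * ln 2 = - (theta * N%:R * n%:R * ln 2) by ring.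
  have e8 : - alpha * ln N%:R = - (alpha * ln N%:R) by ring.
  rewrite e6 e7 e8; lra.
have A0 := AA_gt0 N.-1.
have -> : AA N.-1 ^+ 2 / (1 - q ^+ 2) = K * AA N.-1 ^+ 2 by rewrite /K mulrC.
set T := C1 * 2 `^ (- (N%:R * n%:R * theta)) * N%:R `^ (- alpha) in hA *.
have -> : (Num.sqrt K * C1 * 2 `^ (- (N%:R * n%:R * theta)) * N%:R `^ (- alpha)) ^+ 2
   = Num.sqrt K ^+ 2 * T ^+ 2 by rewrite /T -exprMn !mulrA.
rewrite (sqr_sqrtr (ltW K0)); apply: ler_wpM2l; first exact: ltW.
rewrite expr2 [X in _ <= X]expr2; apply: ler_pM => //; exact: ltW.
Qed.

End RealPart.

Section Case2.
Variables (R : realType) (n : nat) (L p alpha : R).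
Hypotheses (n1 : (1 <= n)%N) (L0 : 0 < L).

Local Notation cc := (@cc R n).
Local Notation a0 := (@a0 R n L).
Local Notation uu := (@uu R n L).
Local Notation AA := (@AA R n L p alpha).
Local Notation theta := (@theta R n p).

Lemma case2 : theta = 0 -> 2^-1 < alpha ->
  exists C : R, 0 < C /\ exists N0 : nat, forall N : nat, (N0 <= N)%N ->
  forall m, \sum_(0 <= k < m) gg n L p alpha N k <= (C * N%:R `^ (2^-1 - alpha)) ^+ 2.
Proof.
move=> th0 ha; have c0 : 0 < cc := @cc_gt0 R n n1.
have g0 : 0 < 2 * alpha - 1 by lra.
have al0 : 0 < alpha by lra.
pose D := expR (2 * alpha * ln (1 + cc)) / (cc * (2 * alpha - 1)).
have D0 : 0 < D by rewrite /D divr_gt0 ?expR_gt0 // mulr_gt0.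
have [N0 [N01 HN0]] := @N0_prop R n n1 (2 * `|1 - cc - a0| + 2 * cc + 2 * `|a0| + 2).
have c20 : 0 < cc / 2 by rewrite divr_gt0.
pose C2 := D * expR (- ((2 * alpha - 1) * ln (cc / 2))).
have C20 : 0 < C2 by rewrite mulr_gt0 // expR_gt0.
exists (Num.sqrt C2); split; first by rewrite sqrtr_gt0.
exists N0 => N hN m.
have hX := HN0 N hN.
have N1 : (1 <= N)%N by apply: leq_trans hN.
have a1 := ler_norm a0; have a2 := ler_norm (- a0); rewrite normrN in a2.
have b1 := ler_norm (1 - cc - a0).
have b2 := normr_ge0 (1 - cc - a0).
have hvM := @vM_bounds R n L n1 N N1 (ltac:(lra)).
have eM : N.-1%:R = N%:R - 1 :> R by case: (N) N1 => // N' _; rewrite /= -natr1 addrK.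
have uM : uu N.-1 = N%:R * cc - cc - a0 by rewrite /uu eM; ring.
have uM0 : 0 <= uu N.-1 by rewrite uM; lra.
have AAk k : 0 <= uu k -> AA k ^+ 2 = expR (- (2 * alpha * ln (1 + uu k))).
  move=> uk; rewrite (@AAexp R n L p alpha L0) // th0 mul0r oppr0 sub0r -expRM_natl; congr expR; ring.
pose P k := D * expR (- ((2 * alpha - 1) * ln (1 + uu (maxn k N.-1)))).
have Pge0 k : 0 <= P k by rewrite /P mulr_ge0 ?expR_ge0 // ltW.
have hg k : gg n L p alpha N k <= P k - P k.+1.
  rewrite /gg /P /=; case: leqP => hk.
    rewrite ?(maxn_idPl hk) ?(maxn_idPl (leq_trans hk (leqnSn k))).
    have uk0 : 0 <= uu k by apply: le_trans uM0 (@uu_le R n L n1 _ _ hk).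
    have v0 : 0 < 1 + uu k by lra.
    have vv : 1 + uu k < 1 + uu k.+1 by rewrite (@uuS R n L); lra.
    have hc := conv_ineq v0 vv g0.
    have ediff : 1 + uu k.+1 - (1 + uu k) = cc by rewrite (@uuS R n L); ring.
    rewrite ediff in hc.
    rewrite -mulrBr.
    apply: le_trans (ler_wpM2l (ltW D0) hc).
    have eD : D * ((2 * alpha - 1) * cc * expR (- ((2 * alpha - 1 + 1) * ln (1 + uu k.+1))))
       = expR (2 * alpha * ln (1 + cc)) * expR (- (2 * alpha * ln (1 + uu k.+1))).
      rewrite /D; have -> : 2 * alpha - 1 + 1 = 2 * alpha by ring.
      field; rewrite !gt_eqF //.
    rewrite eD AAk // -expRD ler_expR.
    have hl : ln (1 + uu k.+1) <= ln (1 + cc) + ln (1 + uu k).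
      have v1 : 0 < 1 + uu k.+1 by lra.
      have p1c : 0 < 1 + cc by lra.
      have pm : 0 < (1 + cc) * (1 + uu k) by rewrite mulr_gt0.
      rewrite -lnM ?posrE // ler_ln ?posrE //.
      rewrite (@uuS R n L); nra.
    have := ler_wpM2l (ltW (mulr_gt0 (ltr0Sn _ 1) al0)) hl.
    lra.
  rewrite ?(maxn_idPr (ltnW hk)) ?(maxn_idPr hk) subrr //.
apply: le_trans (@telesc R _ _ hg Pge0 m) _.
rewrite /P max0n.
have Npos : 0 < N%:R :> R by rewrite ltr0n.
rewrite exprMn (sqr_sqrtr (ltW C20)) (powRE' _ Npos) -expRM_natl /C2 -[X in _ <= X]mulrA -expRD.
apply: ler_wpM2l; first exact: ltW.
rewrite ler_expR.
have hl : ln (cc / 2) + ln N%:R <= ln (1 + uu N.-1).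
  have v0 : 0 < 1 + uu N.-1 by lra.
  have pm : 0 < cc / 2 * N%:R by rewrite mulr_gt0.
  rewrite -lnM ?posrE // ler_ln ?posrE //.
  have -> : cc / 2 * N%:R = N%:R * cc / 2 by ring.
  by move: hvM => /andP[+ _].
have := ler_wpM2l (ltW g0) hl.
have e : 2%:R * ((2^-1 - alpha) * ln N%:R) = - ((2 * alpha - 1) * ln N%:R) :> R.
  by field.
rewrite e; lra.
Qed.

End Case2.

Lemma sqe_ge0 (R : realType) (t : \bar R) : (0 <= t * t)%E.
Proof.
case/orP: (le_total 0%E t) => h; first by apply: mule_ge0.
by apply: mule_le0.
Qed.

Lemma esum_scale (R : realType) (T : choiceType) (I : set T) (c : R) (b : T -> \bar R) :
  0 <= c -> (forall i, 0 <= b i)%E ->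
  (\esum_(i in I) (c%:E * b i) <= c%:E * \esum_(i in I) b i)%E.
Proof.
move=> c0 b0; apply: ge_ereal_sup => _ [X [finX XI] <-].
rewrite fsbig_finite //= -ge0_sume_distrr //.
apply: lee_wpmul2l; first by rewrite lee_fin.
rewrite -fsbig_finite //; apply: ereal_sup_ubound; by exists X.
Qed.

Lemma poweR_half_le1 (R : realType) (x : \bar R) : (0 <= x)%E ->
  (poweR x 2^-1 <= 1)%E -> (x <= 1)%E.
Proof.
case: x => [r| |] //.
  rewrite lee_fin => r0; rewrite poweR_EFin lee_fin powR12_sqrt // => h.
  rewrite lee_fin -(sqr_sqrtr r0); have := sqrtr_ge0 r; rewrite expr2; nra.
by move=> _; rewrite poweRyr ?invr_eq0 ?pnatr_eq0.
Qed.

Lemma poweR_half_le (R : realType) (x : \bar R) (B : R) : 0 <= B -> (0 <= x)%E ->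
  (x <= (B ^+ 2)%:E)%E -> (poweR x 2^-1 <= B%:E)%E.
Proof.
move=> B0; case: x => [r| |] //.
rewrite !lee_fin => r0 h; rewrite powR12_sqrt //.
rewrite -[leRHS](ger0_norm B0) -sqrtr_sqr; exact: ler_wsqrtr h.
Qed.

Lemma side_cond (R : realType) (L : R) (N k : nat) : 0 < L ->
  dside L k <= 2 `^ (- (N%:R - 1)) * L -> (N.-1 <= k)%N.
Proof.
move=> L0; case: N => [|N] //= h.
have e : (N.+1%:R - 1 : R) = N%:R by rewrite mulrSr addrK.
rewrite e powRN powR_mulrn // /dside in h.
rewrite [X in _ <= X]mulrC ler_pM2l // lef_pV2 ?posrE ?exprn_gt0 // in h.
by rewrite -(ler_eXn2l (ltr1n R 2)).
Qed.

Section Main.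
Variables (R : realType) (n : nat) (a : n.-tuple R) (L p alpha : R).
Hypotheses (n1 : (1 <= n)%N) (L0 : 0 < L).

Lemma dside_gt0 k : 0 < dside L k.
Proof. by rewrite /dside divr_gt0 // exprn_gt0. Qed.

Lemma same_gen_disjoint (q q' : nat * n.-tuple nat) : q.1 = q'.1 -> q <> q' ->
  dcube a L q `&` dcube a L q' = set0.
Proof.
case: q q' => [k j] [k' j'] /= ek; subst k' => hne.
have [i hi] : exists i, tnth j i != tnth j' i.
  case: (pselect (exists i, tnth j i != tnth j' i)) => // hno; exfalso; apply: hne.
  congr pair; apply: eq_from_tnth => i; apply/eqP; apply/negPn/negP => h.
  by apply: hno; exists i.
apply/seteqP; split => // x [h1 h2] /=.
move: (h1 i) (h2 i) => /andP[h11 h12] /andP[h21 h22].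
have l0 := dside_gt0 k.
case: (ltngtP (tnth j i) (tnth j' i)) => hij; last by rewrite hij eqxx in hi.
- have : dside L k * (tnth j i).+1%:R <= dside L k * (tnth j' i)%:R.
    by apply: ler_wpM2l; [exact: ltW | rewrite ler_nat].
  lra.
- have : dside L k * (tnth j' i).+1%:R <= dside L k * (tnth j i)%:R.
    by apply: ler_wpM2l; [exact: ltW | rewrite ler_nat].
  lra.
Qed.


Local Open Scope ereal_scope.
Definition ttf (f : n.-tuple R -> R) (q : nat * n.-tuple nat) : \bar R :=
  (let t := ((dvol n L q.1) `^ (n%:R^-1 - 2^-1))%:E *
                  \int[lebn n]_(x in dcube a L q) (`|f x|)%:E in t * t).
Definition ssf (f : n.-tuple R -> R) (q : nat * n.-tuple nat) : \bar R :=
  (let t := (((1 - Num.min (ln (dvol n L q.1)) 0) `^ alpha) *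
                   (dvol n L q.1) `^ (- (1 - p^-1)))%:E *
                  \int[lebn n]_(x in dcube a L q) (`|f x|)%:E in t * t).
Local Close Scope ereal_scope.

Lemma vol_identity k : dvol n L k `^ (n%:R^-1 - 2^-1) =
  AA n L p alpha k * ((1 - Num.min (ln (dvol n L k)) 0) `^ alpha *
                   (dvol n L k) `^ (- (1 - p^-1))).
Proof.
have v0 := @vol_gt0 R n L L0 k.
have w0 : 0 < (1 - Num.min (ln (dvol n L k)) 0) `^ alpha.
  apply: powR_gt0.
  have : Num.min (ln (dvol n L k)) 0 <= 0 by rewrite ge_min lexx orbT.
  lra.
rewrite /AA /ww mulrA divfK ?gt_eqF //.
rewrite !powRE' // -expRD; congr expR.
rewrite /theta; have nz : n%:R != 0 :> R by rewrite pnatr_eq0 -lt0n.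
move: (p^-1) => pi; field; exact: nz.
Qed.

Lemma ealg (A B : R) (I : \bar R) :
  ((A * B)%:E * I * ((A * B)%:E * I) = (A ^+ 2)%:E * (B%:E * I * (B%:E * I)))%E.
Proof.
have e1 : ((A * B)%:E * I = A%:E * (B%:E * I))%E by rewrite EFinM muleA.
by rewrite e1 muleACA -EFinM -expr2.
Qed.

Lemma tt_eq f q : ttf f q = ((AA n L p alpha q.1 ^+ 2)%:E * ssf f q)%E.
Proof. by rewrite /ttf /ssf /= vol_identity ealg. Qed.


Lemma main_bound N (B : R) : 0 <= B ->
  (forall m, \sum_(0 <= k < m) gg n L p alpha N k <= B ^+ 2) ->
  (sN_space a L p alpha N <= B%:E)%E.
Proof.
move=> B0 hB.
apply: ge_ereal_sup => _ [f [_ fn] <-].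
apply: ge_ereal_sup => _ [F [Fdy _] <-].
apply: poweR_half_le => //; first by apply: esum_ge0 => q _; exact: sqe_ge0.
set F' := [set q | F q /\ _].
pose J k := [set q | F' q /\ q.1 = k].
have eF : F' = \bigcup_(k in [set: nat]) J k.
  apply/seteqP; split => [q Fq | q [k _ [Fq _]]] //; by exists q.1.
rewrite eF esum_bigcupT; last 2 first.
  - by move=> i j _ _ [q [[_ <-] [_ <-]]].
  - by move=> q; exact: sqe_ge0.
apply: (@le_trans _ _ (\esum_(k in [set: nat]) (gg n L p alpha N k)%:E)%E).
  apply: le_esum => k _.
  rewrite /gg; case: ifP => hk.
    apply: (@le_trans _ _ (\esum_(q in J k) ((AA n L p alpha k ^+2)%:E * ssf f q))%E).
      apply: le_esum => q [_ <-]; rewrite -tt_eq; exact: lexx.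
    apply: le_trans (@esum_scale R _ (J k) (AA n L p alpha k ^+ 2) (ssf f) (sqr_ge0 _) (fun q => sqe_ge0 _)) _.
    rewrite -[leRHS]mule1; apply: lee_wpmul2l; first by rewrite lee_fin sqr_ge0.
    apply: poweR_half_le1; first by apply: esum_ge0 => q _; exact: sqe_ge0.
    apply: le_trans fn; apply: ereal_sup_ubound; exists (J k) => //.
    split; first by move=> q [[Fq _] _]; exact: Fdy.
    move=> q q' [_ e1] [_ e2] qq'; apply: same_gen_disjoint => //; congruence.
  rewrite esum1 // => q [[_ hd] e]; exfalso.
  by have := side_cond L0 hd; rewrite e hk.
rewrite -nneseries_esumT; last first.
  by move=> k; rewrite lee_fin /gg; case: ifP => _ //; exact: sqr_ge0.
apply: lime_le; first by apply: is_cvg_nneseries => k _ _; rewrite lee_fin /gg; case: ifP => _ //; exact: sqr_ge0.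
apply: nearW => m; rewrite sumEFin lee_fin; exact: hB.
Qed.

End Main.

Unset Implicit Arguments. Set Strict Implicit.

Theorem proposition5p3 (R : realType) (n : nat) (a : n.-tuple R) (L p alpha : R) :
  (2 <= n)%N -> 0 < L ->
  ((2 * n%:R / (n%:R + 2) < p) ->
     exists C : R, 0 < C /\ exists N0 : nat, forall N : nat, (N0 <= N)%N ->
       (sN_space a L p alpha N <=
        (C * 2 `^ (- (N%:R * n%:R * ((n%:R + 2) / (2 * n%:R) - p^-1)))
           * N%:R `^ (- alpha))%:E)%E)
  /\
  ((p = 2 * n%:R / (n%:R + 2)) -> 2^-1 < alpha ->
     exists C : R, 0 < C /\ exists N0 : nat, forall N : nat, (N0 <= N)%N ->
       (sN_space a L p alpha N <= (C * N%:R `^ (2^-1 - alpha))%:E)%E).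
Proof.
move=> n2 L0; have n1 : (1 <= n)%N by apply: leq_trans n2.
have nR : 0 < n%:R :> R by rewrite ltr0n.
have q0 : 0 < 2 * n%:R / (n%:R + 2) :> R by rewrite divr_gt0 // ?mulr_gt0 //; lra.
split.
  move=> hp.
  have th0 : 0 < theta n p.
    rewrite /theta subr_gt0.
    have -> : (n%:R + 2) / (2 * n%:R) = (2 * n%:R / (n%:R + 2))^-1 :> R by rewrite invf_div.
    by rewrite ltf_pV2 ?posrE //; apply: lt_trans hp.
  have [C [C0 [N0 HN]]] := @case1 R n L p alpha n1 L0 th0.
  exists C; split => //; exists N0 => N hN.
  apply: (@main_bound R n a L p alpha n1 L0).
    by rewrite mulr_ge0 ?powR_ge0 // mulr_ge0 ?powR_ge0 // ltW.
  exact: HN.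
move=> hp ha.
have th0 : theta n p = 0.
  by rewrite /theta hp invf_div subrr.
have [C [C0 [N0 HN]]] := @case2 R n L p alpha n1 L0 th0 ha.
exists C; split => //; exists N0 => N hN.
apply: (@main_bound R n a L p alpha n1 L0).
  by rewrite mulr_ge0 ?powR_ge0 // ltW.
exact: HN.
Qed.
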